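(* Let $X$ be a finite rack acting strongly on a set $M$. Let $x\in X$ be of order $k$ in $X$. Then every element $m\cdot(x_i)_{i=1}^r$ (with $m\in M$, $x_1,\ldots,x_r\in X$), where $x$ appears $k$ times in the sequence $x_1,\ldots,x_r$, can be written as $m\cdot(y_j)_{j=1}^{r-k}$ for some $y_1,\ldots,y_{r-k}\in X$.
   Context: A rack is a set $X$ with a binary operation $\rhd$ such that each $x\mapsto x\rhd y$ is bijective and $(x\rhd y)\rhd z=(x\rhd z)\rhd(y\rhd z)$. A stabilizing family of $X$ is a finite family $(u_1,\ldots,u_s)$ with $(\cdots(z\rhd u_1)\cdots)\rhd u_s=z$ for all $z\in X$. The order of $x\in X$ is the least $k\ge1$ such that the constant family $(x,\ldots,x)$ of length $k$ is a stabilizing family. A rack action of $X$ on $M$ is a map $(m,x)\mapsto m\cdot x$ such that each $m\mapsto m\cdot x$ is a bijection, $(m\cdot x)\cdot y=(m\cdot y)\cdot(x\rhd y)$, and for every stabilizing family $(u_1,\ldots,u_s)$ and every cyclic shift $\sigma$ of $\{1,\ldots,s\}$, $m\cdot(u_i)_i=m\cdot(u_{\sigma(i)})_i$, where $m\cdot(x_i)_{i=1}^s:=(\cdots(m\cdot x_1)\cdots)\cdot x_s$. The action is strong if every stabilizing family $(u_1,\ldots,u_s)$ of $X$ satisfies $m\cdot(u_i)_i=m$ for all $m\in M$. *)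

(* Defs.v *)
From mathcomp Require Import all_boot.
Set Implicit Arguments. Unset Strict Implicit. Unset Printing Implicit Defensive.

Definition is_rack (X : Type) (op : X -> X -> X) : Prop :=
  (forall y, bijective (fun x => op x y)) /\
  (forall x y z, op (op x y) z = op (op x z) (op y z)).

Definition rack_iter (X : Type) (op : X -> X -> X) (z : X) (s : seq X) : X :=
  foldl op z s.

Definition stabilizing (X : Type) (op : X -> X -> X) (s : seq X) : Prop :=
  forall z, rack_iter op z s = z.

Definition rack_order_is (X : Type) (op : X -> X -> X) (x : X) (k : nat) : Prop :=
  0 < k /\ stabilizing op (nseq k x) /\
  (forall j, 0 < j < k -> ~ stabilizing op (nseq j x)).

(* m . (x_i)_{i=1}^s := (... (m . x_1) ...) . x_s *)
Definition act_seq (X M : Type) (act : M -> X -> M) (m : M) (s : seq X) : M :=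
  foldl act m s.

Definition is_rack_action (X M : Type) (op : X -> X -> X) (act : M -> X -> M) : Prop :=
  (forall x, bijective (fun m => act m x)) /\
  (forall m x y, act (act m x) y = act (act m y) (op x y)) /\
  (forall s, stabilizing op s -> forall n m, act_seq act m s = act_seq act m (rot n s)).

Definition strong_action (X M : Type) (op : X -> X -> X) (act : M -> X -> M) : Prop :=
  forall s, stabilizing op s -> forall m, act_seq act m s = m.

(* Main.v *)
Require Import Defs.
From mathcomp Require Import all_boot.

Lemma push_lemma (X M : Type) (op : X -> X -> X) (act : M -> X -> M) (x : X) :
  (forall m x y, act (act m x) y = act (act m y) (op x y)) ->
  forall c m a, act_seq act (act m a) (nseq c x) =
    act (act_seq act m (nseq c x)) (rack_iter op a (nseq c x)).
Proof.
move=> H; elim=> [|c IH] m a //=.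
by rewrite /act_seq /= -/(act_seq _ _ _) H IH.
Qed.

Lemma gather (X : eqType) (M : Type) (op : X -> X -> X) (act : M -> X -> M) (x : X) :
  (forall m x y, act (act m x) y = act (act m y) (op x y)) ->
  forall s m, exists t, size t = size s - count_mem x s /\
    act_seq act m s = act_seq act m (nseq (count_mem x s) x ++ t).
Proof.
move=> H; elim=> [|a s IH] m; first by exists [::].
have [t [Ht Ht2]] := IH (act m a).
case: (eqVneq a x) => [eax|ne].
  subst a.
  exists t; split; first by rewrite /= eqxx /= Ht.
  rewrite /= eqxx add1n. exact: Ht2.
exists (rack_iter op a (nseq (count_mem x s) x) :: t); split.
  rewrite /= ?(negbTE ne) ?(eq_sym x a) ?(negbTE ne) /= ?add0n Ht.
  by rewrite subSn // count_size.
rewrite /= ?(negbTE ne) ?(eq_sym x a) ?(negbTE ne) /= ?add0n.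
rewrite /act_seq /= -/(act_seq _ _ _) Ht2 /act_seq !foldl_cat -!/(act_seq _ _ _).
by rewrite (@push_lemma _ _ op act x H).
Qed.

Theorem mainTheorem19 (X : finType) (op : X -> X -> X) (M : Type)
  (act : M -> X -> M) (x : X) (k : nat) :
  is_rack op -> is_rack_action op act -> strong_action op act ->
  rack_order_is op x k ->
  forall (m : M) (s : seq X), count_mem x s = k ->
  exists t : seq X, size t = size s - k /\ act_seq act m s = act_seq act m t.
Proof.
move=> _ [_ [H _]] Hs [_ [Hk _]] m s Hc.
have [t [Ht Ht2]] := @gather _ _ op act x H s m.
exists t; split; first by rewrite Ht Hc.
rewrite Ht2 /act_seq foldl_cat Hc. by have := Hs _ Hk m; rewrite /act_seq => ->.
Qed.
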